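(* Let $(A,S,P)$ be a $\mathbb P$-contraction on $\mathbb C^2$ which is doubly commuting (i.e. each of $A,S,P$ commutes with the adjoints of the other two), such that its Taylor joint spectrum $\sigma_T(A,S,P)$ is contained in $b\mathbb P$ and $A^*A+\frac14S^*S\le I$. Then $(A,S,P)$ is a $\mathbb P$-unitary.
   Context: The pentablock is $\mathbb P=\{(a_{21},\operatorname{tr}A_0,\det A_0): A_0=[a_{ij}]\in M_2(\mathbb C),\ \|A_0\|<1\}$; a $\mathbb P$-contraction is a commuting triple whose Taylor joint spectrum lies in $\overline{\mathbb P}$ and satisfying $\|f(A,S,P)\|\le\sup_{\overline{\mathbb P}}|f|$ for all rational $f$ with no poles in $\overline{\mathbb P}$. With $b\Gamma=\{(z_1+z_2,z_1z_2):|z_1|=|z_2|=1\}$, the distinguished boundary is $b\mathbb P=\{(a,s,p):(s,p)\in b\Gamma,\ |a|^2+\frac14|s|^2=1\}$. A $\mathbb P$-unitary is a commuting triple of normal operators with Taylor joint spectrum in $b\mathbb P$. *)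

(* Defs.v *)
From HB Require Import structures.
From mathcomp Require Import all_boot all_order all_algebra.
From mathcomp Require Import complex.
From mathcomp Require Import reals.
Set Implicit Arguments. Unset Strict Implicit. Unset Printing Implicit Defensive.
Import Order.TTheory GRing.Theory Num.Theory.
Local Open Scope ring_scope.

Section Pentablock.
Variable R : realType.
Local Notation C := R[i].
Local Notation mx := 'M[C]_2.
Local Notation vec := 'cV[C]_2.

Definition adjmx (m n : nat) (X : 'M[C]_(m, n)) : 'M[C]_(n, m) :=
  (map_mx Num.conj_op X)^T.

Definition vnorm2 (v : vec) : C := \sum_(i < 2) `|v i 0| ^+ 2.

Definition opnorm_le (X : mx) (M : C) : Prop :=
  0 <= M /\ forall v : vec, vnorm2 (X *m v) <= M ^+ 2 * vnorm2 v.

(* ||X|| < 1 : the operator norm, i.e. the supremum of ||X v|| over unit v,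
   is < 1 (on C^2 the supremum is attained, so this is: some bound r < 1). *)
Definition opnorm_lt1 (X : mx) : Prop := exists r : C, r < 1 /\ opnorm_le X r.

Definition psd (X : mx) : Prop := forall v : vec, 0 <= (adjmx v *m X *m v) 0 0.

Definition pt := (C * C * C)%type.

Definition pentablock : pt -> Prop := fun z =>
  exists A0 : mx, opnorm_lt1 A0 /\
    z = (A0 1 0, \tr A0, \det A0).

Definition pentablock_cl : pt -> Prop := fun z =>
  forall eps : C, 0 < eps -> exists w, pentablock w /\
    `|z.1.1 - w.1.1| < eps /\ `|z.1.2 - w.1.2| < eps /\ `|z.2 - w.2| < eps.

Definition bGamma (s p : C) : Prop :=
  exists z1 z2 : C, `|z1| = 1 /\ `|z2| = 1 /\ s = z1 + z2 /\ p = z1 * z2.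

Definition bP : pt -> Prop := fun z =>
  bGamma z.1.2 z.2 /\ `|z.1.1| ^+ 2 + 4^-1 * `|z.1.2| ^+ 2 = 1.

(* Exactness of the Koszul complex
   0 -> H -> H^3 -> H^3 -> H -> 0   (H = C^2) of a commuting triple
   d0 x = (T1 x, T2 x, T3 x)
   d1 (x1,x2,x3) = (T2 x3 - T3 x2, T3 x1 - T1 x3, T1 x2 - T2 x1)
   d2 (y1,y2,y3) = T1 y1 + T2 y2 + T3 y3. *)
Definition koszul_exact (T1 T2 T3 : mx) : Prop :=
  (forall x : vec, T1 *m x = 0 -> T2 *m x = 0 -> T3 *m x = 0 -> x = 0) /\
  (forall x1 x2 x3 : vec,
      T2 *m x3 - T3 *m x2 = 0 -> T3 *m x1 - T1 *m x3 = 0 ->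
      T1 *m x2 - T2 *m x1 = 0 ->
      exists x : vec, x1 = T1 *m x /\ x2 = T2 *m x /\ x3 = T3 *m x) /\
  (forall y1 y2 y3 : vec, T1 *m y1 + T2 *m y2 + T3 *m y3 = 0 ->
      exists x1 x2 x3 : vec,
        y1 = T2 *m x3 - T3 *m x2 /\ y2 = T3 *m x1 - T1 *m x3 /\
        y3 = T1 *m x2 - T2 *m x1) /\
  (forall z : vec, exists y1 y2 y3 : vec, z = T1 *m y1 + T2 *m y2 + T3 *m y3).

Definition taylor_spectrum (A S P : mx) : pt -> Prop := fun z =>
  ~ koszul_exact (A - z.1.1%:M) (S - z.1.2%:M) (P - z.2%:M).

Definition commuting (A S P : mx) : Prop :=
  A * S = S * A /\ A * P = P * A /\ S * P = P * S.

Definition poly3 (N : nat) := 'I_N -> 'I_N -> 'I_N -> C.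

Definition peval (N : nat) (c : poly3 N) (z : pt) : C :=
  \sum_(i < N) \sum_(j < N) \sum_(k < N)
     c i j k * z.1.1 ^+ i * z.1.2 ^+ j * z.2 ^+ k.

Definition pevalmx (N : nat) (c : poly3 N) (A S P : mx) : mx :=
  \sum_(i < N) \sum_(j < N) \sum_(k < N)
     c i j k *: (A ^+ i * S ^+ j * P ^+ k).

(* The inequality "||X|| <= sup |f|"
   is written as: every upper bound M of |f| on the closed pentablock
   bounds ||X||. *)
Definition P_contraction (A S P : mx) : Prop :=
  commuting A S P /\
  (forall z, taylor_spectrum A S P z -> pentablock_cl z) /\
  (forall (N : nat) (p q : poly3 N),
     (forall z, pentablock_cl z -> peval q z != 0) ->
     forall M : C, 0 <= M ->
     (forall z, pentablock_cl z -> `|peval p z / peval q z| <= M) ->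
     opnorm_le (pevalmx p A S P * invmx (pevalmx q A S P)) M).

Definition doubly_commuting (A S P : mx) : Prop :=
  commuting A S P /\
  A * adjmx S = adjmx S * A /\ A * adjmx P = adjmx P * A /\
  S * adjmx A = adjmx A * S /\ S * adjmx P = adjmx P * S /\
  P * adjmx A = adjmx A * P /\ P * adjmx S = adjmx S * P.

Definition normalmx (X : mx) : Prop := X * adjmx X = adjmx X * X.

Definition P_unitary (A S P : mx) : Prop :=
  commuting A S P /\ normalmx A /\ normalmx S /\ normalmx P /\
  (forall z, taylor_spectrum A S P z -> bP z).

End Pentablock.

(* Main.v *)
Require Import Defs.
From HB Require Import structures.
From mathcomp Require Import all_boot all_order all_algebra.
From mathcomp Require Import complex.
From mathcomp Require Import reals.
From mathcomp Require Import spectral sesquilinear mxred.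
From mathcomp Require Import ring.
Import Order.TTheory GRing.Theory Num.Theory.
Local Open Scope ring_scope.

Section Aux.
Variable R : realType.
Local Notation C := R[i].
Local Notation mx := 'M[C]_2.
Local Notation vec := 'cV[C]_2.

Lemma adjmxE m n (X : 'M[C]_(m, n)) : adjmx X = (X ^t* )%sesqui.
Proof. by apply/matrixP => i j; rewrite !mxE. Qed.

Lemma adjmxK m n (X : 'M[C]_(m, n)) : adjmx (adjmx X) = X.
Proof. by apply/matrixP => i j; rewrite !mxE conjCK. Qed.

Lemma adjmxM m n p (X : 'M[C]_(m, n)) (Y : 'M[C]_(n, p)) :
  adjmx (X *m Y) = adjmx Y *m adjmx X.
Proof.
apply/matrixP => i j; rewrite !mxE rmorph_sum; apply: eq_bigr => k _.
by rewrite !mxE rmorphM mulrC.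
Qed.

Lemma adjmxD m n (X Y : 'M[C]_(m, n)) : adjmx (X + Y) = adjmx X + adjmx Y.
Proof. by apply/matrixP => i j; rewrite !mxE rmorphD. Qed.

Lemma adjmxB m n (X Y : 'M[C]_(m, n)) : adjmx (X - Y) = adjmx X - adjmx Y.
Proof. by apply/matrixP => i j; rewrite !mxE rmorphB. Qed.

Lemma adjmxZ m n a (X : 'M[C]_(m, n)) : adjmx (a *: X) = a^* *: adjmx X.
Proof. by apply/matrixP => i j; rewrite !mxE rmorphM. Qed.

Lemma adjmx1 n : adjmx (1%:M : 'M[C]_n) = 1%:M.
Proof. by apply/matrixP => i j; rewrite !mxE rmorph_nat eq_sym. Qed.

Lemma vnorm2E (v : vec) : vnorm2 v = (adjmx v *m v) 0 0.
Proof.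
rewrite /vnorm2 mxE; apply: eq_bigr => k _; by rewrite !mxE normCKC.
Qed.

Local Notation o0 := (@ord0 1).
Local Notation o1 := (lift (@ord0 1) (@ord0 0)).

Lemma test (X Y : mx) : (X *m Y) o0 o1 = X o0 o0 * Y o0 o1 + X o0 o1 * Y o1 o1.
Proof. by rewrite !mxE !big_ord_recl big_ord0 addr0 /=. Qed.
Lemma det22 (X : mx) : \det X = X o0 o0 * X o1 o1 - X o0 o1 * X o1 o0.
Proof.
rewrite (expand_det_row X o0) !big_ord_recl big_ord0 addr0 /cofactor !det_mx11 !mxE /=.
have -> : lift o0 (0 : 'I_1) = o1 by apply/val_inj.
have -> : lift o1 (0 : 'I_1) = o0 by apply/val_inj.
by rewrite /= expr0 mul1r expr1 mulN1r mulrN.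
Qed.
Lemma vnorm2_col (X : mx) j : vnorm2 (X *m delta_mx j 0) = `|X o0 j| ^+ 2 + `|X o1 j| ^+ 2.
Proof.
rewrite -colE /vnorm2 !big_ord_recl big_ord0 addr0 !mxE /=.
by [].
Qed.

Lemma ord2_cases (j : 'I_2) : j = o0 \/ j = o1.
Proof. case: j => [[|[|//]]] Hj; [left|right]; exact/val_inj. Qed.

Lemma o10 : (o1 == o0) = false. Proof. by []. Qed.
Lemma o01 : (o0 == o1) = false. Proof. by []. Qed.

Lemma vnorm2_delta j : vnorm2 (delta_mx j 0 : vec) = 1.
Proof.
rewrite /vnorm2 !big_ord_recl big_ord0 addr0 !mxE /= eqxx !andbT.
have [->|->] := ord2_cases j; rewrite ?eqxx ?o10 ?o01 normr1 normr0 expr1n expr0n ?addr0 ?add0r //.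
Qed.

Lemma sq_le1 (x : C) : 0 <= x -> x ^+ 2 <= 1 -> x <= 1.
Proof.
move=> x0 h; rewrite -(ler_pXn2r (n := 2)) ?expr1n //; by rewrite nnegrE.
Qed.

Lemma cs_bound (a b c d r : C) : 0 <= a -> 0 <= b -> 0 <= c -> 0 <= d ->
  0 <= r -> r < 1 -> a ^+ 2 + c ^+ 2 <= r ^+ 2 -> b ^+ 2 + d ^+ 2 <= r ^+ 2 ->
  a * d + b * c <= 1.
Proof.
move=> a0 b0 c0 d0 r0 r1 h0 h1.
have r21 : r ^+ 2 <= 1.
  by rewrite expr2 -[1]mulr1; apply: ler_pM => //; exact: ltW.
have e2 : (a * d + b * c) ^+ 2 <= (a ^+ 2 + c ^+ 2) * (b ^+ 2 + d ^+ 2).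
  rewrite -subr_ge0.
  have -> : (a ^+ 2 + c ^+ 2) * (b ^+ 2 + d ^+ 2) - (a * d + b * c) ^+ 2 = (a * b - c * d) ^+ 2
    by ring.
  apply: real_exprn_even_ge0 => //; apply: rpredB; apply: rpredM; exact: ger0_real.
have e3 : (a ^+ 2 + c ^+ 2) * (b ^+ 2 + d ^+ 2) <= 1.
  apply: (@le_trans _ _ (r ^+ 2 * r ^+ 2)).
    apply: ler_pM => //; by apply: addr_ge0; apply: exprn_ge0.
  rewrite -[1]mulr1; apply: ler_pM => //; exact: exprn_ge0.
apply: sq_le1; first by apply: addr_ge0; apply: mulr_ge0.
exact: le_trans e2 e3.
Qed.

Lemma det_bound (X : mx) : opnorm_lt1 X -> `|\det X| <= 1.
Proof.
case=> r [r1 [r0 Hr]].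
have h0 := Hr (delta_mx o0 0); have h1 := Hr (delta_mx o1 0).
rewrite !vnorm2_col !vnorm2_delta mulr1 in h0 h1.
rewrite det22; apply: le_trans (ler_normB _ _) _.
rewrite !normrM.
by apply: (cs_bound _ _ _ _ _ _ _ _ _ r0 r1 h0 h1).
Qed.
Lemma cl_bound (z : pt R) : pentablock_cl z -> `|z.2| <= 1.
Proof.
move=> hz; rewrite real_leNgt ?realE ?normr_ge0 ?ler01 //; apply/negP => H.
have eps0 : 0 < `|z.2| - 1 by rewrite subr_gt0.
have [w [[A0 [HA0 ->]] [_ [_ h2]]]] := hz _ eps0.
have hd := det_bound A0 HA0.
move: h2 => /=; set d := \det A0 => h2.
have : `|z.2| < `|z.2|.
  rewrite {1}(_ : z.2 = d + (z.2 - d)); last by rewrite addrC subrK.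
  apply: le_lt_trans (ler_normD _ _) _.
  rewrite -[X in _ < X](subrK 1) addrC.
  exact: ltr_leD.
by move=> Hlt; rewrite ltxx in Hlt.
Qed.

Definition pz3 : poly3 R 2 := fun i j k => ((i == o0) && (j == o0) && (k == o1))%:R.
Definition pone : poly3 R 2 := fun i j k => ((i == o0) && (j == o0) && (k == o0))%:R.

Lemma sum2 (V : nmodType) (f : 'I_2 -> V) : \sum_(i < 2) f i = f o0 + f o1.
Proof. by rewrite big_ord_recl big_ord1. Qed.

Lemma pz3E : (pz3 o0 o0 o0 = 0) * (pz3 o0 o0 o1 = 1) * (pz3 o0 o1 o0 = 0) * (pz3 o0 o1 o1 = 0)
  * (pz3 o1 o0 o0 = 0) * (pz3 o1 o0 o1 = 0) * (pz3 o1 o1 o0 = 0) * (pz3 o1 o1 o1 = 0).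
Proof. by rewrite /pz3 !eqxx ?o10 ?o01. Qed.

Lemma poneE : (pone o0 o0 o0 = 1) * (pone o0 o0 o1 = 0) * (pone o0 o1 o0 = 0) * (pone o0 o1 o1 = 0)
  * (pone o1 o0 o0 = 0) * (pone o1 o0 o1 = 0) * (pone o1 o1 o0 = 0) * (pone o1 o1 o1 = 0).
Proof. by rewrite /pone !eqxx ?o10 ?o01. Qed.

Lemma no0 : nat_of_ord o0 = 0%N. Proof. by []. Qed.
Lemma no1 : nat_of_ord o1 = 1%N. Proof. by []. Qed.

Lemma peval_pz3 z : peval pz3 z = z.2.
Proof.
rewrite /peval !sum2 !pz3E !mul0r !addr0 !add0r !mul1r.
by rewrite ?no0 ?no1 ?mul1r; exact: expr1.
Qed.

Lemma peval_pone z : peval pone z = 1.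
Proof.
rewrite /peval !sum2 !poneE !mul0r !addr0 !mul1r.
by rewrite ?no0 ?no1 ?mul1r ?mulr1; try exact: expr0.
Qed.

Lemma pevalmx_pz3 (A S P : mx) : pevalmx pz3 A S P = P.
Proof.
rewrite /pevalmx !sum2 !pz3E !scale0r !addr0 !add0r !scale1r.
by rewrite ?no0 ?no1 ?mul1r; exact: expr1.
Qed.

Lemma pevalmx_pone (A S P : mx) : pevalmx pone A S P = 1.
Proof.
rewrite /pevalmx !sum2 !poneE !scale0r !addr0 !scale1r.
by rewrite ?no0 ?no1 ?mul1r ?mulr1; try exact: expr0.
Qed.

Lemma P_contr (A S P : mx) : P_contraction A S P ->
  forall v : vec, vnorm2 (P *m v) <= vnorm2 v.
Proof.
case=> _ [_ H] v.
have h1 : forall z, pentablock_cl z -> peval pone z != 0.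
  by move=> z _; rewrite peval_pone oner_neq0.
have h2 : forall z, pentablock_cl z -> `|peval pz3 z / peval pone z| <= 1.
  by move=> z hz; rewrite peval_pz3 peval_pone divr1; exact: cl_bound.
case: (H 2%N pz3 pone h1 1 ler01 h2) => _ /(_ v).
by rewrite pevalmx_pz3 pevalmx_pone invmx1 mulr1 expr1n mul1r.
Qed.
Lemma spec_of_eig (A S P : mx) (v : vec) a s p : v != 0 ->
  A *m v = a *: v -> S *m v = s *: v -> P *m v = p *: v ->
  taylor_spectrum A S P (a, s, p).
Proof.
move=> v0 hA hS hP [H _]; move/eqP: v0; apply; apply: H;
by rewrite mulmxBl ?hA ?hS ?hP mul_scalar_mx subrr.
Qed.


Lemma mul22 m n (X : 'M[C]_(m, 2)) (Y : 'M[C]_(2, n)) i j : (X *m Y) i j = X i o0 * Y o0 j + X i o1 * Y o1 j.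
Proof. by rewrite mxE sum2. Qed.

Lemma adjE m n (X : 'M[C]_(m, n)) i j : adjmx X i j = (X j i)^*.
Proof. by rewrite !mxE. Qed.

Lemma dc_entries (X Y : mx) : X o0 o1 = 0 -> Y o0 o1 = 0 ->
  X *m adjmx Y = adjmx Y *m X ->
  [/\ (Y o1 o0)^* * X o1 o0 = 0, X o1 o0 * ((Y o0 o0)^* - (Y o1 o1)^*) = 0
    & (Y o1 o0)^* * (X o0 o0 - X o1 o1) = 0].
Proof.
move=> hX hY h.
have h00 := congr1 (fun M : mx => M o0 o0) h.
have h10 := congr1 (fun M : mx => M o1 o0) h.
have h01 := congr1 (fun M : mx => M o0 o1) h.
move: h00 h10 h01 => /=; rewrite !mul22 !adjE hX hY !rmorph0 !mul0r !mulr0 ?addr0 ?add0r => h00 h10 h01.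
split.
- rewrite (_ : _ * _ = ((Y o0 o0)^* * X o0 o0 + (Y o1 o0)^* * X o1 o0) - (Y o0 o0)^* * X o0 o0); last by ring.
  by rewrite -h00 mulrC subrr.
- rewrite (_ : _ * _ = X o1 o0 * (Y o0 o0)^* - (Y o1 o1)^* * X o1 o0); last by ring.
  by rewrite h10 subrr.
- rewrite (_ : _ * _ = X o0 o0 * (Y o1 o0)^* - (Y o1 o0)^* * X o1 o1); last by ring.
  by rewrite h01 subrr.
Qed.


Definition col2 (c0 c1 : C) : vec := \col_i (if i == o0 then c0 else c1).

Lemma col2_0 c0 c1 : col2 c0 c1 o0 0 = c0.
Proof. by rewrite mxE eqxx. Qed.
Lemma col2_1 c0 c1 : col2 c0 c1 o1 0 = c1.
Proof. by rewrite mxE o10. Qed.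

Lemma col2P (v w : vec) : v o0 0 = w o0 0 -> v o1 0 = w o1 0 -> v = w.
Proof.
move=> h0 h1; apply/matrixP => i j; rewrite !ord1.
by have [->|->] := ord2_cases i.
Qed.

Lemma eig_tri (X : mx) a c0 c1 : X o0 o1 = 0 -> X o0 o0 * c0 = a * c0 ->
  X o1 o0 * c0 + X o1 o1 * c1 = a * c1 -> X *m col2 c0 c1 = a *: col2 c0 c1.
Proof.
move=> h0 h1 h2; apply: col2P; rewrite !mul22 !mxE !eqxx ?o10.
  by rewrite h0 mul0r addr0.
by [].
Qed.

Lemma col2_neq0 c0 c1 : c1 != 0 -> col2 c0 c1 != 0.
Proof.
apply: contra => /eqP h; by rewrite -(col2_1 c0 c1) h mxE.
Qed.

Lemma sq0 (x : C) : 0 <= - `|x| ^+ 2 -> x = 0.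
Proof.
rewrite oppr_ge0 => h; apply/eqP; rewrite -normr_eq0 -(sqrf_eq0 _) eq_le h.
exact: exprn_ge0.
Qed.

Lemma conj_mul0 (y x : C) : y^* * x = 0 -> x != 0 -> y = 0.
Proof.
move/eqP; rewrite mulf_eq0 conjC_eq0 => /orP[/eqP //|/eqP -> ]; by rewrite eqxx.
Qed.

Lemma conj_dif0 (x c d : C) : x * (c^* - d^*) = 0 -> x != 0 -> c = d.
Proof.
move/eqP; rewrite mulf_eq0 => /orP[/eqP -> |]; first by rewrite eqxx.
by rewrite subr_eq0 => /eqP /(can_inj conjCK).
Qed.

Lemma dif0 (y x c : C) : y * (x - c) = 0 -> y != 0 -> x = c.
Proof.
move/eqP; rewrite mulf_eq0 => /orP[/eqP -> |]; first by rewrite eqxx.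
by rewrite subr_eq0 => /eqP.
Qed.

Lemma bP_norm (z : pt R) : bP z -> `|z.2| = 1.
Proof.
by case=> [[z1 [z2 [h1 [h2 [_ ->]]]]] _]; rewrite normrM h1 h2 mulr1.
Qed.

Lemma tri_main (A S P : mx) :
  A o0 o1 = 0 -> S o0 o1 = 0 -> P o0 o1 = 0 ->
  A *m adjmx S = adjmx S *m A -> A *m adjmx P = adjmx P *m A ->
  S *m adjmx A = adjmx A *m S -> S *m adjmx P = adjmx P *m S ->
  P *m adjmx A = adjmx A *m P -> P *m adjmx S = adjmx S *m P ->
  (forall (v : vec) a s p, v != 0 -> A *m v = a *: v -> S *m v = s *: v ->
     P *m v = p *: v -> bP (a, s, p)) ->
  0 <= 1 - (`|A o0 o0| ^+ 2 + `|A o1 o0| ^+ 2 + 4^-1 * (`|S o0 o0| ^+ 2 + `|S o1 o0| ^+ 2)) ->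
  `|P o0 o0| ^+ 2 + `|P o1 o0| ^+ 2 <= 1 ->
  [/\ A o1 o0 = 0, S o1 o0 = 0 & P o1 o0 = 0].
Proof.
move=> tA tS tP dAS dAP dSA dSP dPA dPS hsp hpsd hP.
have [x0|xn0] := eqVneq (A o1 o0) 0; last first.
  have [hy1 hy2 _] := dc_entries _ _ tA tS dAS.
  have [hz1 hz2 _] := dc_entries _ _ tA tP dAP.
  have y0 := conj_mul0 _ _ hy1 xn0; have s01 := conj_dif0 _ _ _ hy2 xn0.
  have z0 := conj_mul0 _ _ hz1 xn0; have p01 := conj_dif0 _ _ _ hz2 xn0.
  pose v := col2 (A o0 o0 - A o1 o1) (A o1 o0).
  have eA : A *m v = A o0 o0 *: v by apply: eig_tri => //; ring.
  have eS : S *m v = S o0 o0 *: v by apply: eig_tri => //; rewrite y0 s01; ring.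
  have eP : P *m v = P o0 o0 *: v by apply: eig_tri => //; rewrite z0 p01; ring.
  have [_ e] := hsp v _ _ _ (col2_neq0 _ _ xn0) eA eS eP.
  move: e => /= e; move: hpsd; rewrite y0 normr0 expr0n /= addr0.
  have -> : 1 - (`|A o0 o0| ^+ 2 + `|A o1 o0| ^+ 2 + 4^-1 * `|S o0 o0| ^+ 2) = - `|A o1 o0| ^+ 2.
    by rewrite -{1}e; ring.
  by move/sq0 => h; rewrite h eqxx in xn0.
have [y0|yn0] := eqVneq (S o1 o0) 0; last first.
  have [_ hx2 _] := dc_entries _ _ tS tA dSA.
  have [hz1 hz2 _] := dc_entries _ _ tS tP dSP.
  have a01 := conj_dif0 _ _ _ hx2 yn0.
  have z0 := conj_mul0 _ _ hz1 yn0; have p01 := conj_dif0 _ _ _ hz2 yn0.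
  pose v := col2 (S o0 o0 - S o1 o1) (S o1 o0).
  have eA : A *m v = A o0 o0 *: v by apply: eig_tri => //; rewrite x0 a01; ring.
  have eS : S *m v = S o0 o0 *: v by apply: eig_tri => //; ring.
  have eP : P *m v = P o0 o0 *: v by apply: eig_tri => //; rewrite z0 p01; ring.
  have [_ e] := hsp v _ _ _ (col2_neq0 _ _ yn0) eA eS eP.
  move: e => /= e; move: hpsd; rewrite x0 normr0 expr0n /= addr0.
  have -> : 1 - (`|A o0 o0| ^+ 2 + 4^-1 * (`|S o0 o0| ^+ 2 + `|S o1 o0| ^+ 2)) =
     4^-1 * (- `|S o1 o0| ^+ 2).
    by rewrite -{1}e; ring.
  rewrite pmulr_rge0 ?invr_gt0 ?ltr0n //.
  by move/sq0 => h; rewrite h eqxx in yn0.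
have [z0|zn0] := eqVneq (P o1 o0) 0; first by [].
have [_ hx2 _] := dc_entries _ _ tP tA dPA.
have [_ hy2 _] := dc_entries _ _ tP tS dPS.
have a01 := conj_dif0 _ _ _ hx2 zn0; have s01 := conj_dif0 _ _ _ hy2 zn0.
pose v := col2 (P o0 o0 - P o1 o1) (P o1 o0).
have eA : A *m v = A o0 o0 *: v by apply: eig_tri => //; rewrite x0 a01; ring.
have eS : S *m v = S o0 o0 *: v by apply: eig_tri => //; rewrite y0 s01; ring.
have eP : P *m v = P o0 o0 *: v by apply: eig_tri => //; ring.
have hb := hsp v _ _ _ (col2_neq0 _ _ zn0) eA eS eP.
have e := bP_norm _ hb; move: e => /= e.
move: hP; rewrite e expr1n -subr_ge0.
have -> : 1 - (1 + `|P o1 o0| ^+ 2) = - `|P o1 o0| ^+ 2 by ring.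
by move/sq0 => h; rewrite h eqxx in zn0.
Qed.
Section Conj.
Variable U : mx.
Hypothesis hUW : U *m adjmx U = 1%:M.
Hypothesis hWU : adjmx U *m U = 1%:M.
Definition Tc (X : mx) := U *m X *m adjmx U.

Lemma TcM X Y : Tc X *m Tc Y = Tc (X *m Y).
Proof. by rewrite /Tc !mulmxA -[U *m X *m adjmx U *m U](mulmxA) hWU mulmx1. Qed.

Lemma Tc_adj X : adjmx (Tc X) = Tc (adjmx X).
Proof. by rewrite /Tc !adjmxM adjmxK mulmxA. Qed.

Lemma Tc1 : Tc 1%:M = 1%:M.
Proof. by rewrite /Tc mulmx1 hUW. Qed.

Lemma TcB X Y : Tc (X - Y) = Tc X - Tc Y.
Proof. by rewrite /Tc mulmxBr mulmxBl. Qed.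

Lemma TcD X Y : Tc (X + Y) = Tc X + Tc Y.
Proof. by rewrite /Tc mulmxDr mulmxDl. Qed.

Lemma TcZ a X : Tc (a *: X) = a *: Tc X.
Proof. by rewrite /Tc -scalemxAr -scalemxAl. Qed.

Lemma Tc_back X : X = adjmx U *m Tc X *m U.
Proof. by rewrite /Tc !mulmxA hWU mul1mx -mulmxA hWU mulmx1. Qed.

Lemma psd_Tc M : psd M -> forall w : vec, 0 <= (adjmx w *m Tc M *m w) 0 0.
Proof.
move=> H w; have := H (adjmx U *m w).
by rewrite adjmxM adjmxK /Tc !mulmxA.
Qed.

Lemma cancelWU (m p : nat) (X : 'M[C]_(m, 2)) (Y : 'M[C]_(2, p)) :
  X *m adjmx U *m U *m Y = X *m Y.
Proof. by rewrite -(mulmxA X) hWU mulmx1. Qed.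

Lemma cancelUW (m p : nat) (X : 'M[C]_(m, 2)) (Y : 'M[C]_(2, p)) :
  X *m U *m adjmx U *m Y = X *m Y.
Proof. by rewrite -(mulmxA X) hUW mulmx1. Qed.

Lemma contr_Tc (P : mx) : (forall v : vec, vnorm2 (P *m v) <= vnorm2 v) ->
  forall w : vec, vnorm2 (Tc P *m w) <= vnorm2 w.
Proof.
move=> H w.
have e1 : adjmx (Tc P *m w) *m (Tc P *m w) =
          adjmx (P *m (adjmx U *m w)) *m (P *m (adjmx U *m w)).
  rewrite /Tc !adjmxM !adjmxK !mulmxA cancelWU; reflexivity.
have e2 : adjmx (adjmx U *m w) *m (adjmx U *m w) = adjmx w *m w.
  rewrite !adjmxM !adjmxK !mulmxA cancelUW; reflexivity.
rewrite !vnorm2E e1 -e2 -!vnorm2E; exact: H.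
Qed.

Lemma eig_Tc X (v : vec) a : Tc X *m v = a *: v ->
  X *m (adjmx U *m v) = a *: (adjmx U *m v).
Proof.
move=> h; rewrite mulmxA {1}(Tc_back X) cancelUW -mulmxA h.
by rewrite scalemxAr.
Qed.

Lemma nz_Tc (v : vec) : v != 0 -> adjmx U *m v != 0.
Proof.
apply: contra => /eqP h; apply/eqP.
by rewrite -(mul1mx v) -hUW -mulmxA h mulmx0.
Qed.

Lemma normal_Tc X : Defs.normalmx (Tc X) -> Defs.normalmx X.
Proof.
rewrite /Defs.normalmx Tc_adj -!mulmxE !TcM => h.
by rewrite (Tc_back (X *m adjmx X)) h -Tc_back.
Qed.

Lemma dc_Tc X Y : X *m adjmx Y = adjmx Y *m X -> Tc X *m adjmx (Tc Y) = adjmx (Tc Y) *m Tc X.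
Proof. by move=> h; rewrite Tc_adj !TcM h. Qed.

Lemma form_e0 (N : mx) : (adjmx (delta_mx o0 0 : vec) *m N *m (delta_mx o0 0 : vec)) 0 0 = N o0 o0.
Proof.
rewrite !mul22 !adjE !mxE !eqxx ?o10 ?o01 /=.
by rewrite rmorph1 rmorph0; ring.
Qed.

Lemma diag_normal (X : mx) : X o0 o1 = 0 -> X o1 o0 = 0 -> Defs.normalmx X.
Proof.
move=> h1 h2; rewrite /Defs.normalmx -mulmxE; apply/matrixP => i j.
rewrite !mul22 !adjE.
by have [->|->] := ord2_cases i; have [->|->] := ord2_cases j; rewrite ?h1 ?h2 ?rmorph0; ring.
Qed.

Lemma psd_entry (A' S' : mx) :
  (1%:M - (adjmx A' *m A' + 4^-1 *: (adjmx S' *m S'))) o0 o0 =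
  1 - (`|A' o0 o0| ^+ 2 + `|A' o1 o0| ^+ 2 + 4^-1 * (`|S' o0 o0| ^+ 2 + `|S' o1 o0| ^+ 2)).
Proof. by rewrite !mxE !sum2 !mxE eqxx -!normCKC. Qed.

Lemma conj_main (A S P : mx) :
  Tc A o0 o1 = 0 -> Tc S o0 o1 = 0 -> Tc P o0 o1 = 0 ->
  A *m adjmx S = adjmx S *m A -> A *m adjmx P = adjmx P *m A ->
  S *m adjmx A = adjmx A *m S -> S *m adjmx P = adjmx P *m S ->
  P *m adjmx A = adjmx A *m P -> P *m adjmx S = adjmx S *m P ->
  (forall z, taylor_spectrum A S P z -> bP z) ->
  psd (1 - (adjmx A *m A + 4^-1 *: (adjmx S *m S))) ->
  (forall v : vec, vnorm2 (P *m v) <= vnorm2 v) ->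
  [/\ Defs.normalmx A, Defs.normalmx S & Defs.normalmx P].
Proof.
move=> tA tS tP dAS dAP dSA dSP dPA dPS hsp hpsd hP.
have hsp' : forall (v : vec) a s p, v != 0 -> Tc A *m v = a *: v -> Tc S *m v = s *: v ->
     Tc P *m v = p *: v -> bP (a, s, p).
  move=> v a s p v0 eA eS eP; apply: hsp.
  exact: (spec_of_eig _ _ _ _ _ _ _ (nz_Tc _ v0) (eig_Tc _ _ _ eA) (eig_Tc _ _ _ eS) (eig_Tc _ _ _ eP)).
have hpsd' := psd_Tc _ hpsd (delta_mx o0 0).
rewrite form_e0 TcB Tc1 TcD TcZ -TcM -Tc_adj -TcM -Tc_adj in hpsd'.
have hP' := contr_Tc _ hP (delta_mx o0 0).
rewrite vnorm2_col vnorm2_delta in hP'.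
have [x0 y0 z0] : [/\ Tc A o1 o0 = 0, Tc S o1 o0 = 0 & Tc P o1 o0 = 0].
  apply: tri_main => //; try exact: dc_Tc.
  by rewrite psd_entry in hpsd'.
split; apply: normal_Tc; exact: diag_normal.
Qed.
End Conj.
End Aux.

Theorem mainTheorem18 (R : realType) (A S P : 'M[R[i]]_2) :
  P_contraction A S P ->
  doubly_commuting A S P ->
  (forall z, taylor_spectrum A S P z -> bP z) ->
  psd (1 - (adjmx A *m A + 4^-1 *: (adjmx S *m S))) ->
  P_unitary A S P.
Proof.
move=> HPc Hdc Hsp Hpsd.
have hP := P_contr _ _ _ _ HPc.
case: Hdc => Hcomm [dAS [dAP [dSA [dSP [dPA dPS]]]]].
have Hcomm' := Hcomm.
case: Hcomm' => cAS [cAP cSP].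
rewrite -!mulmxE in cAS cAP cSP dAS dAP dSA dSP dPA dPS.
have hc : {in [:: A; S; P] &, forall X Y, comm_mx X Y}.
  move=> X Y; rewrite !inE => /or3P[] /eqP-> /or3P[] /eqP->; rewrite /comm_mx //; by apply/esym.
have [U hU hall] := @cotrigonalization _ 2 [:: A; S; P] hc.
have hUW : U *m adjmx U = 1%:M by rewrite adjmxE; apply/unitarymxP.
have hWU : adjmx U *m U = 1%:M.
  by have := mulmxKtV (1%:M : 'M[R[i]]_2) hU (erefl 2%N); rewrite mul1mx -adjmxE.
have tri : forall X, X \in [:: A; S; P] -> Tc _ U X (@ord0 1) (lift (@ord0 1) (@ord0 0)) = 0.
  move=> X hX; move/allP: hall => /(_ X hX) /=.
  rewrite /similar_to conjymx // -adjmxE => /is_trig_mxP; apply.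
  by [].
have tA := tri A (mem_head _ _).
have tS : Tc _ U S (@ord0 1) (lift (@ord0 1) (@ord0 0)) = 0 by apply: tri; rewrite !inE eqxx orbT.
have tP : Tc _ U P (@ord0 1) (lift (@ord0 1) (@ord0 0)) = 0 by apply: tri; rewrite !inE eqxx !orbT.
have [nA nS nP] := conj_main _ _ hUW hWU A S P tA tS tP
  dAS dAP dSA dSP dPA dPS Hsp Hpsd hP.
by split.
Qed.
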